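(* Let $A\in(0,1)$, $M<0$, $Q>0$, $S>0$ and consider the planar system $$\frac{du}{d\tau}=u^2\big((u+A)(1-u)(u-M)-Qv\big),\qquad \frac{dv}{d\tau}=S(u+A)(u-v)v$$ on $\{u\ge0,\ v\ge0\}$, whose positive equilibria are the points $(u,u)$ with $u>0$ a root of $g(u)=u^3-Tu^2-Lu+AM$, where $T=1-A+M$ and $L=A(M+1)-Q-M$. Let $u^*\in(0,1)$ be a root of $g$ and $\Delta=(u^*-T)^2-4\big(u^*(u^*-T)-L\big)$. Then the positive roots of $g$ lie in $(0,1)$, and: (I) if $T\le 0$ or $L\ge 0$, then $g$ has exactly one positive root, so the system has one positive equilibrium; (II) if $T>0$ and $L<0$, then: (i) if $\Delta<0$, then $g$ has exactly one positive root, so the system has one positive equilibrium; (ii) if $\Delta\ge 0$, then $g$ has three positive roots counting multiplicity, namely $u^*$ and $u^*_\pm=\tfrac12\big(T-u^*\pm\sqrt{\Delta}\big)$, so the system has three positive equilibria counting multiplicity.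
   Context: A root $u^*\in(0,1)$ of $g$ always exists because $g(0)=AM<0<Q=g(1)$. $\Delta$ is the discriminant of the quadratic $u^2+(u^*-T)u+u^*(u^*-T)-L$, which equals $g(u)/(u-u^* )$. *)

(* Defs.v *)
From mathcomp Require Import all_boot all_order all_algebra.
Set Implicit Arguments. Unset Strict Implicit. Unset Printing Implicit Defensive.
Import Order.TTheory GRing.Theory Num.Theory.
Local Open Scope ring_scope.

Section Defs.
Variable R : rcfType.

Definition Tpar (A M : R) : R := 1 - A + M.
Definition Lpar (A M Q : R) : R := A * (M + 1) - Q - M.
Definition gpoly (A M Q u : R) : R :=
  u ^+ 3 - Tpar A M * u ^+ 2 - Lpar A M Q * u + A * M.

Definition field_u (A M Q : R) (u v : R) : R :=
  u ^+ 2 * ((u + A) * (1 - u) * (u - M) - Q * v).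
Definition field_v (A S : R) (u v : R) : R :=
  S * (u + A) * (u - v) * v.

Definition pos_equilibrium (A M Q S u v : R) : Prop :=
  0 < u /\ 0 < v /\ field_u A M Q u v = 0 /\ field_v A S u v = 0.

Definition Delta (A M Q ustar : R) : R :=
  (ustar - Tpar A M) ^+ 2 - 4 * (ustar * (ustar - Tpar A M) - Lpar A M Q).
End Defs.

(* Main.v *)
Require Import Defs.
From mathcomp Require Import all_boot all_order all_algebra.
From mathcomp Require Import ring lra.
Import Order.TTheory GRing.Theory Num.Theory.
Local Open Scope ring_scope.

Section H.
Variable R : rcfType.
Variables (A M Q S : R).

Lemma gfact (us u : R) :
  gpoly A M Q u = (u - us) * (u ^+ 2 + (us - Tpar A M) * u + (us * (us - Tpar A M) - Lpar A M Q))
     + gpoly A M Q us.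
Proof. rewrite /gpoly; ring. Qed.

Lemma equil_iff (hA0 : 0 < A) (hS : 0 < S) (u v : R) :
  pos_equilibrium A M Q S u v <-> (0 < u /\ v = u /\ gpoly A M Q u = 0).
Proof.
have key : forall w : R, (w + A) * (1 - w) * (w - M) - Q * w = - gpoly A M Q w.
  by move=> w; rewrite /gpoly /Tpar /Lpar; ring.
rewrite /pos_equilibrium /field_u /field_v; split.
- move=> [u0 [v0 [fu fv]]].
  have uA : u + A != 0 by rewrite gt_eqF // ltr_wpDr // ltW.
  have Sn : S != 0 by rewrite gt_eqF.
  have vn : v != 0 by rewrite gt_eqF.
  have uv : u - v = 0.
    move/eqP: fv; rewrite !mulf_eq0 (negbTE Sn) (negbTE uA) (negbTE vn) /=.
    by rewrite orbF => /eqP.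
  have vu : v = u by apply/eqP; rewrite eq_sym -subr_eq0 uv.
  split=> //; split=> //.
  move: fu; rewrite vu key => /eqP; rewrite mulf_eq0 expf_eq0 /= (gt_eqF u0) /=.
  by rewrite oppr_eq0 => /eqP.
- move=> [u0 [-> gu]]; split=> //; split=> //; split.
  + by rewrite key gu oppr0 mulr0.
  + by rewrite subrr mulr0 mul0r.
Qed.
End H.

Theorem lemma1 (R : rcfType) (A M Q S ustar : R)
  (hA0 : 0 < A) (hA1 : A < 1) (hM : M < 0) (hQ : 0 < Q) (hS : 0 < S)
  (hu0 : 0 < ustar) (hu1 : ustar < 1) (hg : gpoly A M Q ustar = 0) :
  (* the positive equilibria are exactly the points (u,u) with u>0 a root of g *)
  (forall u v : R, pos_equilibrium A M Q S u v <-> (0 < u /\ v = u /\ gpoly A M Q u = 0)) /\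
  (* positive roots of g lie in (0,1) *)
  (forall u : R, 0 < u -> gpoly A M Q u = 0 -> u < 1) /\
  (* (I) *)
  ((Tpar A M <= 0 \/ 0 <= Lpar A M Q) ->
     (exists! u : R, 0 < u /\ gpoly A M Q u = 0) /\
     (exists! p : R * R, pos_equilibrium A M Q S p.1 p.2)) /\
  (* (II) *)
  ((0 < Tpar A M /\ Lpar A M Q < 0) ->
     (* (i) *)
     (Delta A M Q ustar < 0 ->
        (exists! u : R, 0 < u /\ gpoly A M Q u = 0) /\
        (exists! p : R * R, pos_equilibrium A M Q S p.1 p.2)) /\
     (* (ii) *)
     (0 <= Delta A M Q ustar ->
        let up := (Tpar A M - ustar + Num.sqrt (Delta A M Q ustar)) / 2 in
        let um := (Tpar A M - ustar - Num.sqrt (Delta A M Q ustar)) / 2 in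
        0 < um /\ 0 < up /\
        (forall u : R, gpoly A M Q u = (u - ustar) * (u - up) * (u - um)) /\
        (forall u v : R, pos_equilibrium A M Q S u v <->
           (v = u /\ (u = ustar \/ u = up \/ u = um))))).
Proof.
have EQ := @equil_iff R A M Q S hA0 hS.
set T := Tpar A M. set L := Lpar A M Q.
set c := ustar * (ustar - T) - L.
have hc : ustar * c = - (A * M).
  move: hg; rewrite /gpoly -/T -/L /c => h.
  apply/eqP; rewrite -subr_eq0; apply/eqP; rewrite -h; ring.
have AM : 0 < - (A * M) by rewrite oppr_gt0 pmulr_rlt0.
have c0 : 0 < c.
  by rewrite -(pmulr_rgt0 _ hu0) hc.
have uniq_root : (forall r, 0 < r -> 0 < r ^+ 2 + (ustar - T) * r + c) ->
    (exists! u : R, 0 < u /\ gpoly A M Q u = 0) /\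
    (exists! p : R * R, pos_equilibrium A M Q S p.1 p.2).
  move=> qpos.
  have U : forall u, 0 < u -> gpoly A M Q u = 0 -> u = ustar.
    move=> u u0; rewrite (@gfact R A M Q ustar) hg addr0 -/T -/L -/c => /eqP.
    rewrite mulf_eq0 (gt_eqF (qpos u u0)) orbF subr_eq0 => /eqP //.
  split.
    by exists ustar; split=> // u [u0 gu]; rewrite (U u u0 gu).
  exists (ustar, ustar); split; first by apply/EQ.
  case=> a b /= /EQ [a0 [-> ga]]; by rewrite (U a a0 ga).
split; first exact: EQ.
split.
  move=> u u0 gu; rewrite ltNge; apply/negP => u1.
  have key : gpoly A M Q u = - ((u + A) * (1 - u) * (u - M) - Q * u).
    by rewrite /gpoly /Tpar /Lpar; ring.
  have h1 : 0 <= (u + A) * (u - 1) * (u - M).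
    apply: mulr_ge0; last by lra.
    by apply: mulr_ge0; lra.
  have : 0 < Q * u by exact: mulr_gt0.
  move: gu; rewrite key => gu; nra.
split.
  move=> hTL; apply: uniq_root => r r0.
  case: hTL => [hT|hL].
    have : 0 < ustar - T by lra.
    move=> h; nra.
  have : 0 < ustar * (ustar - T) by rewrite /c in c0; lra.
  rewrite pmulr_rgt0 // => h; nra.
move=> [hT hL]; split.
  move=> hD; apply: uniq_root => r r0.
  move: hD; rewrite /Delta -/T -/L => hD.
  have : 0 <= (2 * r + ustar - T) ^+ 2 by apply: sqr_ge0.
  rewrite /c; nra.
move=> hD up um.
set D := Delta A M Q ustar.
have sq : Num.sqrt D ^+ 2 = D by rewrite sqr_sqrtr.
have sq0 : 0 <= Num.sqrt D by rewrite sqrtr_ge0.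
have Dd : D = (ustar - T) ^+ 2 - 4 * c by rewrite /D /Delta.
set s := T - ustar.
have hLs : - L = c + ustar * s by rewrite /c /s; ring.
have s0 : 0 < s.
  rewrite ltNge; apply/negP => hs.
  have h1 : 4 * c <= s ^+ 2 by rewrite /s; move: hD; rewrite -/D Dd; nra.
  have h2 : - s < ustar by rewrite /s; lra.
  nra.
have sD : Num.sqrt D < s.
  rewrite -(ltr_pXn2r (n:=2)) //; last by rewrite nnegrE ltW.
  by rewrite sq Dd /s; nra.
have um0 : 0 < um by rewrite /um -/T -/s; lra.
have up0 : 0 < up by rewrite /up -/T -/s; lra.
have F : forall u, gpoly A M Q u = (u - ustar) * (u - up) * (u - um).
  move=> u; rewrite (@gfact R A M Q ustar) hg addr0 -/T -/L -/c -mulrA.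
  congr (_ * _); rewrite /up /um -/T -/D.
  have -> : c = ((ustar - T) ^+ 2 - D) / 4 by rewrite Dd; field.
  move: sq; set r := Num.sqrt D => sq; rewrite -sq; by field.
split; [by [] |]. split; [by [] |]. split; [by [] |].
move=> u v; rewrite EQ; split.
  move=> [u0 [-> gu]]; split=> //.
  move: gu; rewrite F => /eqP; rewrite !mulf_eq0 !subr_eq0 => /orP[/orP[]|] /eqP; tauto.
move=> [-> hu]; split; first by case: hu => [->|[->|->]].
split=> //; rewrite F.
by case: hu => [->|[->|->]]; rewrite subrr ?mulr0 ?mul0r.
Qed.
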